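(* Let $\mathbb N=(N,m^N,u^N)$ be a monad and $\mathbb C=(C,\Delta^C,\varepsilon^C)$ a comonad on a category $\mathcal A$, and let $L:\mathcal B\to\mathcal A_{\mathbb N}$ be a functor with right adjoint $R:\mathcal A_{\mathbb N}\to\mathcal B$ (unit $\eta$, counit $\epsilon$). There is a bijective correspondence between: (a) pairs consisting of a lifting $\widetilde{\mathbb C}$ of $\mathbb C$ to a comonad on $\mathcal A_{\mathbb N}$ and a left $\widetilde{\mathbb C}$-coaction $l:L\to\widetilde CL$ making $(L,l)$ a $\widetilde{\mathbb C}$-Galois functor; and (b) natural isomorphisms $\xi:CU_{\mathbb N}\to U_{\mathbb N}LR$ such that $(U_{\mathbb N},\xi)$ is a comonad arrow from $\mathbb C$ to the comonad $LR$ (with comultiplication $L\eta R$ and counit $\epsilon$) on $\mathcal A_{\mathbb N}$. Under this correspondence $\xi=U_{\mathbb N}\mathrm{can}^{-1}$.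
   Context: $\mathcal A_{\mathbb N}$ is the Eilenberg–Moore category of $\mathbb N$-modules, $U_{\mathbb N}:\mathcal A_{\mathbb N}\to\mathcal A$ the forgetful functor. A lifting of $\mathbb C$ to $\mathcal A_{\mathbb N}$ is a comonad $\widetilde{\mathbb C}=(\widetilde C,\widetilde\Delta,\widetilde\varepsilon)$ on $\mathcal A_{\mathbb N}$ with $U_{\mathbb N}\widetilde C=CU_{\mathbb N}$, $U_{\mathbb N}\widetilde\Delta=\Delta^CU_{\mathbb N}$, $U_{\mathbb N}\widetilde\varepsilon=\varepsilon^CU_{\mathbb N}$. A left comodule functor for a comonad $\mathbb G=(G,\Delta,\varepsilon)$ is a functor $L$ with $l:L\to GL$ satisfying $(\varepsilon L)\circ l=L$, $(\Delta L)\circ l=(Gl)\circ l$; if $L$ has right adjoint $R$ with counit $\epsilon$, $\mathrm{can}:=(G\epsilon)\circ(lR):LR\to G$ is a comonad morphism, and $(L,l)$ is $\mathbb G$-Galois if $\mathrm{can}$ is an isomorphism. A comonad arrow from $\mathbb C$ (on $\mathcal A$) to $\mathbb C'=(C',\Delta',\varepsilon')$ (on $\mathcal A'$) is $(F:\mathcal A'\to\mathcal A,\xi:CF\to FC')$ with $(F\varepsilon')\circ\xi=\varepsilon F$ and $(F\Delta')\circ\xi=(\xi C')\circ(C\xi)\circ(\Delta F)$. ($\circ$ vertical, juxtaposition horizontal composition; a functor's name denotes its identity transformation.) *)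

(* Defs.v *)
From Stdlib Require Import ProofIrrelevance.

Set Implicit Arguments.
Unset Strict Implicit.

Record Category := {
  Ob :> Type;
  Hom : Ob -> Ob -> Type;
  cid : forall a, Hom a a;
  comp : forall x y z, Hom y z -> Hom x y -> Hom x z;
  comp_id_l : forall a b (f : Hom a b), comp (cid b) f = f;
  comp_id_r : forall a b (f : Hom a b), comp f (cid a) = f;
  comp_assoc : forall a b c d (f : Hom c d) (g : Hom b c) (h : Hom a b),
      comp f (comp g h) = comp (comp f g) h }.
Arguments Hom {_} _ _.
Arguments cid {_} _.
Arguments comp {_ _ _ _} _ _.

Notation "g ∘ f" := (comp g f) (at level 40, left associativity).

Record Functor (A B : Category) := {
  fobj :> A -> B;
  fmap : forall a b, Hom a b -> Hom (fobj a) (fobj b);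
  fmap_id : forall a, fmap (cid a) = cid (fobj a);
  fmap_comp : forall a b c (g : Hom b c) (f : Hom a b),
      fmap (g ∘ f) = fmap g ∘ fmap f }.
Arguments fmap {A B} _ {a b} _.

Definition IdF (A : Category) : Functor A A.
Proof.
  refine {| fobj := fun a => a; fmap := fun a b f => f |}; reflexivity.
Defined.

Definition CompF (A B C : Category) (G : Functor B C) (F : Functor A B) : Functor A C.
Proof.
  refine {| fobj := fun a => G (F a); fmap := fun a b f => fmap G (fmap F f) |}.
  - intros a; rewrite !fmap_id; reflexivity.
  - intros a b c g f; rewrite !fmap_comp; reflexivity.
Defined.

Record NatTrans (A B : Category) (F G : Functor A B) := {
  comp_at :> forall a, Hom (F a) (G a);
  natural : forall a b (f : Hom a b), fmap G f ∘ comp_at a = comp_at b ∘ fmap F f }.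

Record Monad (A : Category) := {
  mT : Functor A A;
  mmu : NatTrans (CompF mT mT) mT;
  meta : NatTrans (IdF A) mT;
  mon_assoc : forall a, mmu a ∘ fmap mT (mmu a) = mmu a ∘ mmu (mT a);
  mon_unit_l : forall a, mmu a ∘ meta (mT a) = cid (mT a);
  mon_unit_r : forall a, mmu a ∘ fmap mT (meta a) = cid (mT a) }.

Record Comonad (A : Category) := {
  cT : Functor A A;
  cdelta : NatTrans cT (CompF cT cT);
  ceps : NatTrans cT (IdF A);
  com_coassoc : forall a, fmap cT (cdelta a) ∘ cdelta a = cdelta (cT a) ∘ cdelta a;
  com_counit_l : forall a, ceps (cT a) ∘ cdelta a = cid (cT a);
  com_counit_r : forall a, fmap cT (ceps a) ∘ cdelta a = cid (cT a) }.

Section EM.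
Variables (A : Category) (N : Monad A).

Record EMObj := {
  car : Ob A;
  act : Hom (mT N car) car;
  act_unit : act ∘ meta N car = cid car;
  act_assoc : act ∘ fmap (mT N) act = act ∘ mmu N car }.

Record EMHom (X Y : EMObj) := {
  hom_of : Hom (car X) (car Y);
  hom_prop : hom_of ∘ act X = act Y ∘ fmap (mT N) hom_of }.

Lemma EMHom_eq (X Y : EMObj) (f g : EMHom X Y) : hom_of f = hom_of g -> f = g.
Proof.
  destruct f as [f pf], g as [g pg]; simpl; intros e; subst g.
  f_equal; apply proof_irrelevance.
Qed.

Definition EMid (X : EMObj) : EMHom X X.
Proof.
  refine {| hom_of := cid (car X) |}.
  rewrite fmap_id, comp_id_l, comp_id_r; reflexivity.
Defined.

Definition EMcomp (X Y Z : EMObj) (g : EMHom Y Z) (f : EMHom X Y) : EMHom X Z.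
Proof.
  refine {| hom_of := hom_of g ∘ hom_of f |}.
  rewrite fmap_comp, <- comp_assoc, hom_prop, comp_assoc, hom_prop, comp_assoc.
  reflexivity.
Defined.

Definition EM : Category.
Proof.
  refine {| Ob := EMObj; Hom := EMHom; cid := EMid; comp := EMcomp |}.
  - intros a b f; apply EMHom_eq; simpl; apply comp_id_l.
  - intros a b f; apply EMHom_eq; simpl; apply comp_id_r.
  - intros a b c d f g h; apply EMHom_eq; simpl; apply comp_assoc.
Defined.

Definition EMforget : Functor EM A.
Proof.
  refine (@Build_Functor EM A (fun X : EMObj => car X) (fun X Y (f : EMHom X Y) => hom_of f) _ _); reflexivity.
Defined.
End EM.
Arguments car {A N} _.
Arguments act {A N} _.
Arguments hom_of {A N X Y} _.

Record Adjunction (A B : Category) (L : Functor B A) (R : Functor A B) := {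
  adj_unit : NatTrans (IdF B) (CompF R L);
  adj_counit : NatTrans (CompF L R) (IdF A);
  adj_tri_l : forall b, adj_counit (L b) ∘ fmap L (adj_unit b) = cid (L b);
  adj_tri_r : forall a, fmap R (adj_counit a) ∘ adj_unit (R a) = cid (R a) }.

Definition castHom (A : Category) (a a' b b' : Ob A) (e1 : a = a') (e2 : b = b')
  (f : Hom a b) : Hom a' b' :=
  match e1 in _ = x, e2 in _ = y return Hom x y with eq_refl, eq_refl => f end.

(* A lifting of the comonad Cm to a comonad on the Eilenberg-Moore category:
   a comonad Ct on A_N with U Ct = C U, U Delta~ = Delta U, U eps~ = eps U
   (strict equalities, the morphism parts stated up to the transport along
   the object-level equality). *)
Record Lifting (A : Category) (N : Monad A) (Cm : Comonad A) := {
  lift : Comonad (EM N);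
  lift_obj : forall X : EMObj N, car (cT lift X) = cT Cm (car X);
  lift_map : forall (X Y : EMObj N) (f : EMHom X Y),
      castHom (lift_obj X) (lift_obj Y) (hom_of (fmap (cT lift) f))
      = fmap (cT Cm) (hom_of f);
  lift_delta : forall X : EMObj N,
      castHom (lift_obj X)
              (eq_trans (lift_obj (cT lift X)) (f_equal (fobj (cT Cm)) (lift_obj X)))
              (hom_of (cdelta lift X))
      = cdelta Cm (car X);
  lift_eps : forall X : EMObj N,
      castHom (lift_obj X) eq_refl (hom_of (ceps lift X)) = ceps Cm (car X) }.

Section Data.
Variables (A B : Category) (N : Monad A) (Cm : Comonad A)
          (L : Functor B (EM N)) (R : Functor (EM N) B) (adj : Adjunction L R).

Definition is_coaction (G : Comonad (EM N)) (l : NatTrans L (CompF (cT G) L)) : Prop :=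
  (forall b, ceps G (L b) ∘ l b = cid (L b)) /\
  (forall b, cdelta G (L b) ∘ l b = fmap (cT G) (l b) ∘ l b).

Definition can_at (G : Comonad (EM N)) (l : NatTrans L (CompF (cT G) L)) (X : EMObj N)
  : Hom (L (R X)) (cT G X) :=
  fmap (cT G) (adj_counit adj X) ∘ l (R X).

Definition is_Galois (G : Comonad (EM N)) (l : NatTrans L (CompF (cT G) L)) : Prop :=
  forall X : EMObj N, exists g : Hom (cT G X) (L (R X)),
    g ∘ can_at l X = cid (L (R X)) /\ can_at l X ∘ g = cid (cT G X).

Definition DataA : Type :=
  { Ct : Lifting N Cm &
    { l : NatTrans L (CompF (cT (lift Ct)) L) | is_coaction l /\ is_Galois l } }.

Definition is_comonad_arrow
  (xi : NatTrans (CompF (cT Cm) (EMforget N)) (CompF (EMforget N) (CompF L R))) : Prop :=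
  (forall X : EMObj N, hom_of (adj_counit adj X) ∘ xi X = ceps Cm (car X)) /\
  (forall X : EMObj N,
      hom_of (fmap L (adj_unit adj (R X))) ∘ xi X
      = xi (L (R X)) ∘ fmap (cT Cm) (xi X) ∘ cdelta Cm (car X)).

Definition is_natiso (A' B' : Category) (F G : Functor A' B') (t : NatTrans F G) : Prop :=
  forall a, exists g : Hom (G a) (F a), g ∘ t a = cid (F a) /\ t a ∘ g = cid (G a).

Definition DataB : Type :=
  { xi : NatTrans (CompF (cT Cm) (EMforget N)) (CompF (EMforget N) (CompF L R))
  | is_natiso xi /\ is_comonad_arrow xi }.

Definition Ucan (d : DataA) (X : EMObj N) : Hom (car (L (R X))) (cT Cm (car X)) :=
  castHom eq_refl (lift_obj (projT1 d) X) (hom_of (can_at (proj1_sig (projT2 d)) X)).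

End Data.

(* Main.v *)
Require Import Defs.
From Stdlib Require Import ProofIrrelevance FunctionalExtensionality ClassicalEpsilon.
Set Implicit Arguments.
Unset Strict Implicit.

Definition toH {C : Category} {a b : Ob C} (e : a = b) : Hom a b := castHom eq_refl e (cid a).

Lemma castE {C : Category} (a a' b b' : Ob C) (e1 : a = a') (e2 : b = b') (f : Hom a b) :
  castHom e1 e2 f = toH e2 ∘ f ∘ toH (eq_sym e1).
Proof. destruct e1, e2; simpl. rewrite comp_id_l, comp_id_r. reflexivity. Qed.

Lemma toH_l {C : Category} (a b : Ob C) (e : a = b) : toH (eq_sym e) ∘ toH e = cid a.
Proof. destruct e; simpl. apply comp_id_l. Qed.
Lemma toH_r {C : Category} (a b : Ob C) (e : a = b) : toH e ∘ toH (eq_sym e) = cid b.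
Proof. destruct e; simpl. apply comp_id_l. Qed.
Lemma toH_trans {C : Category} (a b c : Ob C) (e1 : a = b) (e2 : b = c) :
  toH (eq_trans e1 e2) = toH e2 ∘ toH e1.
Proof. destruct e1, e2; simpl. rewrite comp_id_l. reflexivity. Qed.
Lemma fmap_toH {C D : Category} (F : Functor C D) (a b : Ob C) (e : a = b) :
  fmap F (toH e) = toH (f_equal (fobj F) e).
Proof. destruct e; simpl. apply fmap_id. Qed.

Lemma inv_unique {C : Category} (a b : Ob C) (f : Hom a b) (g h : Hom b a) :
  g ∘ f = cid a -> f ∘ h = cid b -> g = h.
Proof.
  intros H1 H2. rewrite <- (comp_id_r g), <- H2, comp_assoc, H1, comp_id_l. reflexivity.
Qed.

Lemma NatTrans_eq (C D : Category) (F G : Functor C D) (s t : NatTrans F G) :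
  (forall a, s a = t a) -> s = t.
Proof.
  destruct s as [s ps], t as [t pt]; simpl; intros H.
  assert (s = t) by (apply functional_extensionality_dep; exact H). subst t.
  f_equal; apply proof_irrelevance.
Qed.

Lemma EMObj_eq (A : Category) (N : Monad A) (X Y : EMObj N) (e : car X = car Y) :
  act Y ∘ fmap (mT N) (toH e) = toH e ∘ act X -> X = Y.
Proof.
  destruct X as [x ax u1 a1], Y as [y ay u2 a2]; simpl in *. destruct e; simpl.
  rewrite fmap_id, comp_id_l, comp_id_r. intros ->. f_equal; apply proof_irrelevance.
Qed.

Ltac nrm := cbn [fobj fmap IdF CompF EMforget] in *.
Tactic Notation "rw" constr(t) := let H := fresh in cbn [fobj fmap IdF CompF EMforget]; pose proof t as H; cbn [fobj fmap IdF CompF EMforget] in H; rewrite H; clear H.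
Tactic Notation "rwl" constr(t) := let H := fresh in cbn [fobj fmap IdF CompF EMforget]; pose proof t as H; cbn [fobj fmap IdF CompF EMforget] in H; rewrite <- H; clear H.

Lemma conj1 {C : Category} (a b c d : Ob C) (kX : Hom a b) (xX : Hom b a)
  (kY : Hom c d) (xY : Hom d c) (u : Hom a c) (v : Hom b d) :
  xY ∘ kY = cid c -> kX ∘ xX = cid b -> kY ∘ u = v ∘ kX -> u ∘ xX = xY ∘ v.
Proof.
  intros h1 h2 h3. rewrite <- (comp_id_l u), <- h1, <- (comp_assoc xY kY u), h3.
  rewrite <- !comp_assoc, h2, comp_id_r. reflexivity.
Qed.
Lemma conj2 {C : Category} (a b c d : Ob C) (kX : Hom a b) (xX : Hom b a)
  (kY : Hom c d) (xY : Hom d c) (u : Hom a c) (v : Hom b d) :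
  kY ∘ xY = cid d -> xX ∘ kX = cid a -> u ∘ xX = xY ∘ v -> kY ∘ u = v ∘ kX.
Proof.
  intros h1 h2 h3. rewrite <- (comp_id_r u), <- h2, (comp_assoc u xX kX), h3.
  rewrite !comp_assoc, h1, comp_id_l. reflexivity.
Qed.
Lemma post1 {C : Category} (a b c : Ob C) (k : Hom a b) (x : Hom b a) (f : Hom b c) (g : Hom a c) :
  k ∘ x = cid b -> f ∘ k = g -> g ∘ x = f.
Proof. intros h1 h2. rewrite <- h2, <- comp_assoc, h1, comp_id_r. reflexivity. Qed.

Section Main.
Variables (A B : Category) (N : Monad A) (Cm : Comonad A)
          (L : Functor B (EM N)) (R : Functor (EM N) B) (adj : Adjunction L R).

Lemma eps_nat (X Y : EM N) (f : Hom X Y) :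
  f ∘ adj_counit adj X = adj_counit adj Y ∘ fmap L (fmap R f).
Proof. exact (natural (adj_counit adj) f). Qed.
Lemma eta_nat (a b : B) (f : Hom a b) :
  fmap R (fmap L f) ∘ adj_unit adj a = adj_unit adj b ∘ f.
Proof. exact (natural (adj_unit adj) f). Qed.

Section Gen.
Variables (G : Comonad (EM N)) (l : NatTrans L (CompF (cT G) L)).

Lemma l_nat (a b : B) (f : Hom a b) : fmap (cT G) (fmap L f) ∘ l a = l b ∘ fmap L f.
Proof. exact (natural l f). Qed.
Lemma geps_nat (X Y : EM N) (f : Hom X Y) : f ∘ ceps G X = ceps G Y ∘ fmap (cT G) f.
Proof. exact (natural (ceps G) f). Qed.
Lemma gdelta_nat (X Y : EM N) (f : Hom X Y) :
  fmap (cT G) (fmap (cT G) f) ∘ cdelta G X = cdelta G Y ∘ fmap (cT G) f.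
Proof. exact (natural (cdelta G) f). Qed.

Lemma can_nat (X Y : EM N) (f : Hom X Y) :
  can_at adj l Y ∘ fmap L (fmap R f) = fmap (cT G) f ∘ can_at adj l X.
Proof.
  unfold can_at. nrm. rewrite <- comp_assoc. rwl l_nat. rewrite comp_assoc, <- fmap_comp.
  rwl (eps_nat f). rewrite fmap_comp, comp_assoc. reflexivity.
Qed.

Lemma can_counit (X : EMObj N) : is_coaction l ->
  ceps G X ∘ can_at adj l X = adj_counit adj X.
Proof.
  intros [H1 H2]. unfold can_at. nrm. rewrite comp_assoc. rwl geps_nat. rewrite <- comp_assoc.
  rw H1. apply comp_id_r.
Qed.

Lemma l_from_can (b : B) : l b = can_at adj l (L b) ∘ fmap L (adj_unit adj b).
Proof.
  unfold can_at. nrm. rewrite <- comp_assoc. rwl l_nat. rewrite comp_assoc, <- fmap_comp.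
  rw adj_tri_l. rewrite fmap_id, comp_id_l. reflexivity.
Qed.

Lemma can_comult (X : EMObj N) : is_coaction l ->
  cdelta G X ∘ can_at adj l X =
  fmap (cT G) (can_at adj l X) ∘ can_at adj l (L (R X)) ∘ fmap L (adj_unit adj (R X)).
Proof.
  intros [H1 H2]. rewrite <- comp_assoc. rwl l_from_can. unfold can_at. nrm.
  rewrite fmap_comp, <- comp_assoc. rwl H2. rewrite !comp_assoc. rw gdelta_nat.
  reflexivity.
Qed.
End Gen.

Lemma U_comp (X Y Z : EM N) (g : Hom Y Z) (f : Hom X Y) :
  hom_of (g ∘ f) = hom_of g ∘ hom_of f.
Proof. reflexivity. Qed.
Lemma U_id (X : EM N) : hom_of (cid X) = cid (car X).
Proof. reflexivity. Qed.

Definition Kprops (k : forall X : EMObj N, Hom (car (L (R X))) (cT Cm (car X))) : Prop :=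
 (forall (X Y : EM N) (f : Hom X Y),
     k Y ∘ hom_of (fmap L (fmap R f)) = fmap (cT Cm) (hom_of f) ∘ k X) /\
 (forall X, ceps Cm (car X) ∘ k X = hom_of (adj_counit adj X)) /\
 (forall X, cdelta Cm (car X) ∘ k X =
    fmap (cT Cm) (k X) ∘ k (L (R X)) ∘ hom_of (fmap L (adj_unit adj (R X)))).

Definition ginv (d : DataA Cm adj) (X : EMObj N) : Hom (cT (lift (projT1 d)) X) (L (R X)) :=
  proj1_sig (constructive_indefinite_description _ (proj2 (proj2_sig (projT2 d)) X)).

Lemma ginv_spec (d : DataA Cm adj) (X : EMObj N) :
  ginv d X ∘ can_at adj (proj1_sig (projT2 d)) X = cid _ /\ can_at adj (proj1_sig (projT2 d)) X ∘ ginv d X = cid _.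
Proof. unfold ginv. destruct constructive_indefinite_description as [g Hg]. exact Hg. Qed.

Definition xiA (d : DataA Cm adj) (X : EMObj N) : Hom (cT Cm (car X)) (car (L (R X))) :=
  hom_of (ginv d X) ∘ toH (eq_sym (lift_obj (projT1 d) X)).

Lemma Ucan_E (d : DataA Cm adj) (X : EMObj N) : Ucan d X =
  toH (lift_obj (projT1 d) X) ∘ hom_of (can_at adj (proj1_sig (projT2 d)) X).
Proof. unfold Ucan. rewrite castE. simpl. apply comp_id_r. Qed.

Lemma xiA_inv (d : DataA Cm adj) (X : EMObj N) : xiA d X ∘ Ucan d X = cid _ /\ Ucan d X ∘ xiA d X = cid _.
Proof.
  destruct (ginv_spec d X) as [H1 H2].
  rewrite Ucan_E; unfold xiA; split.
  - rewrite comp_assoc, <- (comp_assoc _ _ (toH _)), toH_l, comp_id_r, <- U_comp, H1.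
    reflexivity.
  - rewrite comp_assoc, <- (comp_assoc _ _ (hom_of (ginv d X))), <- U_comp, H2, U_id.
    rewrite comp_id_r. apply toH_r.
Qed.

Lemma K_A (d : DataA Cm adj) : Kprops (Ucan d).
Proof.
  destruct d as [Ct [l [pc pg]]].
  split; [|split].
  - intros X Y f. rewrite !Ucan_E. simpl proj1_sig. simpl projT1.
    rewrite <- comp_assoc, <- U_comp. rw (can_nat l f). rewrite U_comp.
    pose proof (lift_map Ct f) as H. rewrite castE in H. rewrite <- H.
    rewrite !comp_assoc, <- (comp_assoc _ (toH (eq_sym _)) (toH _)), toH_l, comp_id_r.
    reflexivity.
  - intros X. rewrite !Ucan_E. simpl proj1_sig. simpl projT1.
    pose proof (lift_eps Ct X) as H. rewrite castE in H. simpl in H. rewrite comp_id_l in H.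
    rewrite <- H.
    nrm. rewrite !comp_assoc, <- (comp_assoc _ (toH (eq_sym _)) (toH _)), toH_l, comp_id_r, <- U_comp.
    rw (can_counit X pc). reflexivity.
  - intros X. rewrite !Ucan_E. simpl proj1_sig. simpl projT1.
    pose proof (lift_delta Ct X) as H. rewrite castE, toH_trans, <- fmap_toH in H.
    rewrite <- H. nrm.
    rewrite !comp_assoc, <- (comp_assoc _ (toH (eq_sym _)) (toH _)), toH_l, comp_id_r.
    rewrite <- !comp_assoc, <- U_comp. rw (can_comult X pc).
    pose proof (lift_map Ct (can_at adj l X)) as H2. rewrite castE in H2.
    rewrite fmap_comp, <- H2, !U_comp, !comp_assoc, <- (comp_assoc _ (toH (eq_sym _)) (toH _)), toH_l, comp_id_r.
    reflexivity.
Qed.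

Section Inv.
Variables (k : forall X : EMObj N, Hom (car (L (R X))) (cT Cm (car X)))
          (xi : forall X : EMObj N, Hom (cT Cm (car X)) (car (L (R X))))
          (H1 : forall X, xi X ∘ k X = cid _) (H2 : forall X, k X ∘ xi X = cid _).

Definition XIprops : Prop :=
 (forall (X Y : EM N) (f : Hom X Y),
    hom_of (fmap L (fmap R f)) ∘ xi X = xi Y ∘ fmap (cT Cm) (hom_of f)) /\
 (forall X, hom_of (adj_counit adj X) ∘ xi X = ceps Cm (car X)) /\
 (forall X, hom_of (fmap L (adj_unit adj (R X))) ∘ xi X =
     xi (L (R X)) ∘ fmap (cT Cm) (xi X) ∘ cdelta Cm (car X)).

Lemma K_XI : Kprops k -> XIprops.
Proof.
  intros [K1 [K2 K3]]. nrm. split; [|split]; intros; nrm.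
  - eapply conj1; [apply H1|apply H2|apply K1].
  - eapply post1; [apply H2|apply K2].
  - eapply conj1 with (kY := fmap (cT Cm) (k X) ∘ k (L (R X))).
    + rewrite <- comp_assoc, (comp_assoc (fmap _ (xi X))), <- fmap_comp, H1, fmap_id, comp_id_l. apply H1.
    + apply H2.
    + symmetry. apply K3.
Qed.

Lemma XI_K : XIprops -> Kprops k.
Proof.
  intros [K1 [K2 K3]]. nrm. split; [|split]; intros; nrm.
  - eapply conj2; [apply H2|apply H1|apply K1].
  - eapply post1; [apply H1|apply K2].
  - symmetry. eapply conj2 with (xY := xi (L (R X)) ∘ fmap (cT Cm) (xi X)).
    + rewrite <- comp_assoc, (comp_assoc (k _)), H2, comp_id_l, <- fmap_comp, H2, fmap_id. reflexivity.
    + apply H1.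
    + apply K3.
Qed.
End Inv.

Lemma XI_A (d : DataA Cm adj) : XIprops (xiA d).
Proof.
  apply (@K_XI (Ucan d)); try apply K_A; intros X; apply xiA_inv.
Qed.

Definition xiNT (d : DataA Cm adj) :
  NatTrans (CompF (cT Cm) (EMforget N)) (CompF (EMforget N) (CompF L R)).
Proof.
  refine (@Build_NatTrans (EM N) A (CompF (cT Cm) (EMforget N)) (CompF (EMforget N) (CompF L R)) (fun X : EM N => xiA d X) _).
  abstract (intros X Y f; nrm; apply (proj1 (XI_A d))).
Defined.

Lemma Phi_prop (d : DataA Cm adj) : is_natiso (xiNT d) /\ is_comonad_arrow adj (xiNT d).
Proof.
  split.
  - intros X. exists (Ucan d X). simpl. destruct (xiA_inv d X); split; assumption.
  - destruct (XI_A d) as [_ [H2 H3]]. split; intros X; nrm; simpl; [apply H2|apply H3].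
Qed.

Definition Phi (d : DataA Cm adj) : DataB Cm adj := exist _ (xiNT d) (Phi_prop d).


Lemma EM_transfer (X Y : EMObj N) (h : EMHom X Y) (f : Hom (car X) (car Y)) :
  f = hom_of h -> f ∘ act X = act Y ∘ fmap (mT N) f.
Proof. intros ->. apply hom_prop. Qed.

Section PsiSec.
Variable b : DataB Cm adj.

Definition xiB (X : EMObj N) : Hom (cT Cm (car X)) (car (L (R X))) := proj1_sig b X.
Definition chiB (X : EMObj N) : Hom (car (L (R X))) (cT Cm (car X)) :=
  proj1_sig (constructive_indefinite_description _ (proj1 (proj2_sig b) X)).
Lemma chiB_spec X : chiB X ∘ xiB X = cid _ /\ xiB X ∘ chiB X = cid _.
Proof. unfold chiB. destruct constructive_indefinite_description as [g Hg]. exact Hg. Qed.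
Lemma chi_xi X : chiB X ∘ xiB X = cid _. Proof. apply chiB_spec. Qed.
Lemma xi_chi X : xiB X ∘ chiB X = cid _. Proof. apply chiB_spec. Qed.

Lemma XI_B : XIprops xiB.
Proof.
  destruct (proj2_sig b) as [Hi [Ha1 Ha2]]. unfold xiB; simpl. split; [|split].
  - intros X Y f. pose proof (natural (proj1_sig b) f) as H. nrm. exact H.
  - exact Ha1.
  - exact Ha2.
Qed.

Lemma K_B : Kprops chiB.
Proof. apply (@XI_K chiB xiB); [apply xi_chi|apply chi_xi|apply XI_B]. Qed.

Definition actB (X : EMObj N) : Hom (mT N (cT Cm (car X))) (cT Cm (car X)) :=
  chiB X ∘ act (L (R X)) ∘ fmap (mT N) (xiB X).

Lemma actB_unit X : actB X ∘ meta N (cT Cm (car X)) = cid _.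
Proof.
  unfold actB. rewrite <- !comp_assoc. rw (natural (meta N) (xiB X)).
  rewrite (comp_assoc (act _)). rw act_unit. rewrite comp_id_l. apply chi_xi.
Qed.

Lemma actB_assoc X : actB X ∘ fmap (mT N) (actB X) = actB X ∘ mmu N (cT Cm (car X)).
Proof.
  unfold actB. rewrite !fmap_comp, <- !comp_assoc.
  rewrite (comp_assoc (fmap _ (xiB _)) (fmap _ (chiB _))), <- fmap_comp, xi_chi, fmap_id, comp_id_l.
  rewrite (comp_assoc (act _)), act_assoc. rw (natural (mmu N) (xiB X)).
  rewrite !comp_assoc. reflexivity.
Qed.

Definition ObjB (X : EMObj N) : EMObj N :=
  {| car := cT Cm (car X); act := actB X; act_unit := actB_unit X; act_assoc := actB_assoc X |}.

Lemma kB_prop X : xiB X ∘ act (ObjB X) = act (L (R X)) ∘ fmap (mT N) (xiB X).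
Proof. simpl. unfold actB. rewrite !comp_assoc, xi_chi, comp_id_l. reflexivity. Qed.
Lemma mB_prop X : chiB X ∘ act (L (R X)) = act (ObjB X) ∘ fmap (mT N) (chiB X).
Proof.
  simpl. unfold actB. rewrite <- !comp_assoc, <- fmap_comp, xi_chi, fmap_id, comp_id_r.
  reflexivity.
Qed.

Definition kB X : @Hom (EM N) (ObjB X) (L (R X)) := @Build_EMHom A N (ObjB X) (L (R X)) (xiB X) (kB_prop X).
Definition mB X : @Hom (EM N) (L (R X)) (ObjB X) := @Build_EMHom A N (L (R X)) (ObjB X) (chiB X) (mB_prop X).

Lemma mapB_prop (X Y : EMObj N) (f : EMHom X Y) :
  fmap (cT Cm) (hom_of f) ∘ act (ObjB X) = act (ObjB Y) ∘ fmap (mT N) (fmap (cT Cm) (hom_of f)).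
Proof.
  apply (@EM_transfer _ _ (mB Y ∘ fmap L (fmap R (f : @Hom (EM N) X Y)) ∘ kB X)).
  cbn [hom_of mB kB EM EMcomp comp]. destruct K_B as [K1 _].
  rewrite K1, <- comp_assoc. cbn [car ObjB]. rewrite chi_xi, comp_id_r. reflexivity.
Qed.

Definition mapB (X Y : EM N) (f : Hom X Y) : @Hom (EM N) (ObjB X) (ObjB Y) :=
  @Build_EMHom A N (ObjB X) (ObjB Y) (fmap (cT Cm) (hom_of f)) (mapB_prop f).

Definition FB : Functor (EM N) (EM N).
Proof.
  refine (@Build_Functor (EM N) (EM N) ObjB mapB _ _).
  - abstract (intros X; apply EMHom_eq; simpl; apply fmap_id).
  - abstract (intros X Y Z g f; apply EMHom_eq; simpl; apply fmap_comp).
Defined.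

Lemma deltaB_prop (X : EMObj N) :
  cdelta Cm (car X) ∘ act (ObjB X) = act (ObjB (ObjB X)) ∘ fmap (mT N) (cdelta Cm (car X)).
Proof.
  apply (@EM_transfer _ _ (mB (ObjB X) ∘ fmap L (fmap R (mB X)) ∘ fmap L (adj_unit adj (R X)) ∘ kB X)).
  cbn [hom_of mB kB EM EMcomp comp]. destruct K_B as [K1 [K2 K3]].
  rewrite K1. cbn [hom_of mB]. nrm. rewrite <- K3, <- comp_assoc. cbn [car ObjB].
  rewrite chi_xi, comp_id_r. reflexivity.
Qed.

Lemma epsB_prop (X : EMObj N) :
  ceps Cm (car X) ∘ act (ObjB X) = act X ∘ fmap (mT N) (ceps Cm (car X)).
Proof.
  apply (@EM_transfer _ _ (adj_counit adj X ∘ kB X)).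
  cbn [hom_of mB kB EM EMcomp comp]. destruct K_B as [K1 [K2 K3]].
  nrm. rewrite <- K2, <- comp_assoc. cbn [car ObjB].
  rewrite chi_xi, comp_id_r. reflexivity.
Qed.

Definition deltaB (X : EM N) : @Hom (EM N) (ObjB X) (ObjB (ObjB X)) :=
  @Build_EMHom A N (ObjB X) (ObjB (ObjB X)) (cdelta Cm (car X)) (deltaB_prop X).
Definition epsB (X : EM N) : @Hom (EM N) (ObjB X) X :=
  @Build_EMHom A N (ObjB X) X (ceps Cm (car X)) (epsB_prop X).

Definition deltaNT : NatTrans FB (CompF FB FB).
Proof.
  refine (@Build_NatTrans (EM N) (EM N) FB (CompF FB FB) deltaB _).
  abstract (intros X Y f; apply EMHom_eq; simpl; exact (natural (cdelta Cm) (hom_of f))).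
Defined.
Definition epsNT : NatTrans FB (IdF (EM N)).
Proof.
  refine (@Build_NatTrans (EM N) (EM N) FB (IdF (EM N)) epsB _).
  abstract (intros X Y f; apply EMHom_eq; simpl; exact (natural (ceps Cm) (hom_of f))).
Defined.

Definition ComB : Comonad (EM N).
Proof.
  refine (@Build_Comonad (EM N) FB deltaNT epsNT _ _ _).
  - abstract (intros X; apply EMHom_eq; simpl; apply com_coassoc).
  - abstract (intros X; apply EMHom_eq; simpl; apply com_counit_l).
  - abstract (intros X; apply EMHom_eq; simpl; apply com_counit_r).
Defined.

Definition LiftB : Lifting N Cm.
Proof.
  refine (@Build_Lifting A N Cm ComB (fun X => eq_refl) _ _ _); abstract reflexivity.
Defined.

Definition lB_at (c : B) : @Hom (EM N) (L c) (ObjB (L c)) :=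
  mB (L c) ∘ fmap L (adj_unit adj c).

Definition lB : NatTrans L (CompF (cT ComB) L).
Proof.
  refine (@Build_NatTrans B (EM N) L (CompF (cT ComB) L) lB_at _).
  abstract (intros a c f; apply EMHom_eq; destruct K_B as [K1 _];
    unfold lB_at; cbn [hom_of mB EM EMcomp comp ComB FB cT fmap CompF mapB];
    rewrite <- comp_assoc, <- U_comp, <- fmap_comp; rwl (eta_nat f);
    rewrite fmap_comp, U_comp, !comp_assoc; cbn [car ObjB FB fobj]; rw K1; rewrite ?comp_assoc; reflexivity).
Defined.

Lemma lB_coaction : is_coaction lB.
Proof.
  destruct K_B as [K1 [K2 K3]]. split; intros c; apply EMHom_eq.
  - cbn [hom_of mB EM EMcomp comp ComB epsNT epsB ceps comp_at lB lB_at].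
    rewrite comp_assoc. rw K2. rewrite <- U_comp. rw adj_tri_l. reflexivity.
  - cbn [hom_of mB EM EMcomp comp ComB deltaNT deltaB cdelta comp_at lB lB_at FB mapB fmap cT].
    rewrite comp_assoc. rw K3. rewrite fmap_comp.
    assert (E : hom_of (fmap L (adj_unit adj (R (L c)))) ∘ hom_of (fmap L (adj_unit adj c)) =
      hom_of (fmap L (fmap R (fmap L (adj_unit adj c)))) ∘ hom_of (fmap L (adj_unit adj c))).
    { rewrite <- !U_comp, <- !fmap_comp. rw (eta_nat (adj_unit adj c)). reflexivity. }
    rewrite <- !comp_assoc. rw E. rewrite !comp_assoc.
    rewrite <- (comp_assoc _ (fmap (cT Cm) (hom_of _)) (chiB (L c))). rwl K1.
    rewrite !comp_assoc. reflexivity.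
Qed.

Lemma canB (X : EMObj N) : can_at adj lB X = mB X.
Proof.
  destruct K_B as [K1 _]. apply EMHom_eq. unfold can_at.
  cbn [hom_of mB EM EMcomp comp ComB FB cT fmap CompF mapB lB lB_at comp_at].
  rewrite comp_assoc. cbn [car ObjB FB fobj]. rwl K1.
  rewrite <- comp_assoc, <- U_comp, <- fmap_comp. rw adj_tri_r. rewrite fmap_id, U_id, comp_id_r.
  reflexivity.
Qed.

Lemma lB_Galois : is_Galois adj lB.
Proof.
  intros X. exists (kB X). rewrite canB. split; apply EMHom_eq; simpl; [apply xi_chi|apply chi_xi].
Qed.

Definition Psi : DataA Cm adj := existT _ LiftB (exist _ lB (conj lB_coaction lB_Galois)).

Lemma Ucan_Psi X : Ucan Psi X = chiB X.
Proof. change (hom_of (can_at adj lB X) = chiB X). rewrite canB. reflexivity. Qed.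
End PsiSec.

Lemma obj_lemma (b : DataB Cm adj) (X Y : EMObj N) (e : car Y = cT Cm (car X)) (c : EMHom (L (R X)) Y) :
  toH e ∘ hom_of c = chiB b X -> act (ObjB b X) ∘ fmap (mT N) (toH e) = toH e ∘ act Y.
Proof.
  intros H.
  assert (Hc : hom_of c = toH (eq_sym e) ∘ chiB b X).
  { rewrite <- H, comp_assoc, toH_l, comp_id_l. reflexivity. }
  assert (Hid : hom_of c ∘ (xiB b X ∘ toH e) = cid _).
  { rewrite Hc, <- comp_assoc, (comp_assoc (chiB b X)), chi_xi, comp_id_l. apply toH_l. }
  transitivity (toH e ∘ act Y ∘ fmap (mT N) (hom_of c ∘ (xiB b X ∘ toH e))).
  - rewrite !fmap_comp, !comp_assoc, <- (comp_assoc (toH e) (act Y)), <- hom_prop.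
    rewrite (comp_assoc (toH e) (hom_of c)), H. reflexivity.
  - rewrite Hid, fmap_id, comp_id_r. reflexivity.
Qed.

Lemma K_eq (d : DataA Cm adj) (b : DataB Cm adj) :
  (forall X, Ucan d X = chiB b X) -> d = Psi b.
Proof.
  intros H0.
  assert (H : forall X, toH (lift_obj (projT1 d) X) ∘ hom_of (can_at adj (proj1_sig (projT2 d)) X) = chiB b X).
  { intros X. rewrite <- Ucan_E. apply H0. }
  clear H0.
  destruct d as [Ct [l [pc pg]]]. cbn [projT1 projT2 proj1_sig] in H.
  assert (HL : forall c, toH (lift_obj Ct (L c)) ∘ hom_of (l c) =
                          chiB b (L c) ∘ hom_of (fmap L (adj_unit adj c))).
  { intros c. rewrite (l_from_can l c), U_comp, comp_assoc. rw (H (L c)). reflexivity. }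
  destruct Ct as [G lobj lmap ldelta leps].
  destruct G as [F dl ep ax1 ax2 ax3].
  destruct F as [fo fm fid fcomp].
  destruct dl as [dat dnat]. destruct ep as [eat enat]. destruct l as [lat lnat].
  assert (Efo : fo = ObjB b).
  { apply functional_extensionality; intros X.
    apply (@EMObj_eq A N (fo X) (ObjB b X) (lobj X)).
    eapply obj_lemma; exact (H X). }
  subst fo.
  assert (Elo : lobj = fun X => eq_refl) by (apply functional_extensionality_dep; intros; apply proof_irrelevance).
  subst lobj.
  assert (Efm : fm = mapB b).
  { apply functional_extensionality_dep; intros X; apply functional_extensionality_dep; intros Y.
    apply functional_extensionality; intros f. apply EMHom_eq. exact (lmap X Y f). }
  subst fm.
  assert (fid = fmap_id (FB b)) by apply proof_irrelevance. subst fid.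
  assert (fcomp = fmap_comp (FB b)) by apply proof_irrelevance. subst fcomp.
  assert (Edat : dat = comp_at (deltaNT b)).
  { apply functional_extensionality_dep; intros X. apply EMHom_eq. exact (ldelta X). }
  subst dat.
  assert (dnat = natural (deltaNT b)) by apply proof_irrelevance. subst dnat.
  assert (Eeat : eat = comp_at (epsNT b)).
  { apply functional_extensionality_dep; intros X. apply EMHom_eq. exact (leps X). }
  subst eat.
  assert (enat = natural (epsNT b)) by apply proof_irrelevance. subst enat.
  assert (ax1 = com_coassoc (ComB b)) by apply proof_irrelevance. subst ax1.
  assert (ax2 = com_counit_l (ComB b)) by apply proof_irrelevance. subst ax2.
  assert (ax3 = com_counit_r (ComB b)) by apply proof_irrelevance. subst ax3.
  assert (lmap = lift_map (LiftB b)) by apply proof_irrelevance. subst lmap.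
  assert (ldelta = lift_delta (LiftB b)) by apply proof_irrelevance. subst ldelta.
  assert (leps = lift_eps (LiftB b)) by apply proof_irrelevance. subst leps.
  assert (Elat : lat = comp_at (lB b)).
  { apply functional_extensionality_dep; intros c. apply EMHom_eq.
    pose proof (HL c) as E. simpl in E. rewrite comp_id_l in E. exact E. }
  subst lat.
  assert (lnat = natural (lB b)) by apply proof_irrelevance. subst lnat.
  assert (pc = lB_coaction b) by apply proof_irrelevance. subst pc.
  assert (pg = lB_Galois b) by apply proof_irrelevance. subst pg.
  reflexivity.
Qed.
End Main.

Lemma sig_eq_pi (T : Type) (P : T -> Prop) (u v : {x : T | P x}) :
  proj1_sig u = proj1_sig v -> u = v.
Proof.
  destruct u as [x px], v as [y py]; simpl; intros e; subst y.
  f_equal; apply proof_irrelevance.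
Qed.

Unset Implicit Arguments.
Set Strict Implicit.

Theorem mainTheorem9 (A B : Category) (N : Monad A) (Cm : Comonad A)
  (L : Functor B (EM N)) (R : Functor (EM N) B) (adj : Adjunction L R) :
  exists (Phi : DataA Cm adj -> DataB Cm adj) (Psi : DataB Cm adj -> DataA Cm adj),
    (forall a, Psi (Phi a) = a) /\ (forall b, Phi (Psi b) = b) /\
    (forall a (X : EMObj N),
        proj1_sig (Phi a) X ∘ Ucan a X = cid (car (L (R X))) /\
        Ucan a X ∘ proj1_sig (Phi a) X = cid (cT Cm (car X))).
Proof.
  exists (fun d => Phi d), (fun b => Psi b).
  split; [|split].
  - intros a. symmetry. apply K_eq. intros X.
    apply (@inv_unique _ _ _ (xiA a X)).
    + apply xiA_inv.
    + apply (xi_chi (Phi a) X).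
  - intros b. apply sig_eq_pi. apply NatTrans_eq. intros X.
    change (xiA (Psi b) X = xiB b X). unfold xiA.
    change (toH (eq_sym (lift_obj (projT1 (Psi b)) X))) with (cid (cT Cm (car X))).
    rewrite comp_id_r.
    apply (@inv_unique _ _ _ (chiB b X)).
    + destruct (ginv_spec (Psi b) X) as [H1 _].
      assert (H3 : ginv (Psi b) X ∘ mB b X = cid _) by (rewrite <- canB; exact H1).
      pose proof (f_equal hom_of H3) as H2. cbn [hom_of EM EMcomp comp mB EMid cid] in H2.
      exact H2.
    + apply chi_xi.
  - intros a X. apply xiA_inv.
Qed.
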